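(* Let $\mathbb{F}$ be a field and $n\ge 0$ an integer with $|\mathbb{F}| \geq 2n-1$. Let $V$ be an $\mathbb{F}$-vector space of dimension $2n$. Then the greatest possible dimension of an affine subspace of $\mathcal{A}^2(V)$ all of whose elements are symplectic forms is $n(n-1)$.
   Context: $\mathcal{A}^2(V)$ denotes the vector space of all alternating bilinear forms on $V$ (bilinear forms $b$ with $b(x,x)=0$ for all $x\in V$). A symplectic form is a non-degenerate alternating bilinear form. The field may have any characteristic, including 2. *)

(* Defs.v *)
From HB Require Import structures.
From mathcomp Require Import all_boot all_order all_algebra.
Set Implicit Arguments. Unset Strict Implicit. Unset Printing Implicit Defensive.
Import GRing.Theory.
Local Open Scope ring_scope.

(* V is identified with F^m (row vectors 'rV[F]_m); a bilinear form on V is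
   given by its Gram matrix A via  b_A(x,y) = x A y^T. *)
Definition bform (F : fieldType) (m : nat) (A : 'M[F]_m) (x y : 'rV[F]_m) : F :=
  (x *m A *m y^T) 0 0.

Definition alternating (F : fieldType) (m : nat) (A : 'M[F]_m) : Prop :=
  forall x : 'rV[F]_m, bform A x x = 0.

Definition nondegenerate (F : fieldType) (m : nat) (A : 'M[F]_m) : Prop :=
  forall x : 'rV[F]_m, (forall y : 'rV[F]_m, bform A x y = 0) -> x = 0.

Definition symplectic (F : fieldType) (m : nat) (A : 'M[F]_m) : Prop :=
  alternating A /\ nondegenerate A.

(* the affine subspace A0 + W (W a linear subspace of the space of bilinear
   forms) consists only of symplectic forms; this forces A0 and W to lie in
   the space A^2(V) of alternating forms. *)
Definition symplectic_affine (F : fieldType) (m : nat)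
  (A0 : 'M[F]_m) (W : {vspace 'M[F]_m}) : Prop :=
  forall B, B \in W -> symplectic (A0 + B).

(* Main.v *)
Require Import Defs.
From HB Require Import structures.
From mathcomp Require Import all_boot all_order all_algebra.
From mathcomp Require Import zify.
Set Implicit Arguments. Unset Strict Implicit. Unset Printing Implicit Defensive.
Import GRing.Theory.
Local Open Scope ring_scope.
Section Basics.
Variable F : fieldType.

Lemma bform_delta m (A : 'M[F]_m) i j :
  bform A (delta_mx 0 i) (delta_mx 0 j) = A i j.
Proof.
rewrite /bform -rowE trmx_delta -colE.
by rewrite !mxE.
Qed.

Lemma alt_diag m (A : 'M[F]_m) : alternating A -> forall i, A i i = 0.
Proof. by move=> hA i; rewrite -bform_delta hA. Qed.

Lemma bformDl m (A : 'M[F]_m) x x' y : bform A (x + x') y = bform A x y + bform A x' y.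
Proof. by rewrite /bform !mulmxDl mxE. Qed.

Lemma bformDr m (A : 'M[F]_m) x y y' : bform A x (y + y') = bform A x y + bform A x y'.
Proof. by rewrite /bform linearD /= mulmxDr mxE. Qed.

Lemma alt_skew m (A : 'M[F]_m) : alternating A -> forall i j, A i j = - A j i.
Proof.
move=> hA i j; have := hA (delta_mx 0 i + delta_mx 0 j).
rewrite bformDl !bformDr !bform_delta !alt_diag // add0r addr0 => /eqP.
by rewrite addr_eq0 => /eqP.
Qed.

Lemma alt_tr m (A : 'M[F]_m) : alternating A -> A^T = - A.
Proof. by move=> hA; apply/matrixP=> i j; rewrite !mxE (alt_skew hA). Qed.

Lemma bform_tr m (A : 'M[F]_m) x y : bform A^T x y = bform A y x.
Proof.
rewrite /bform.
have -> : y *m A *m x^T = (x *m A^T *m y^T)^T by rewrite !trmx_mul !trmxK mulmxA.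
by rewrite [RHS]mxE.
Qed.

Lemma alt_KKt m (K : 'M[F]_m) : alternating (K - K^T).
Proof.
move=> x; rewrite /bform.
have -> : x *m (K - K^T) *m x^T = x *m K *m x^T - (x *m K *m x^T)^T.
  by rewrite mulmxBr mulmxBl !trmx_mul trmxK mulmxA.
by rewrite !mxE subrr.
Qed.

Lemma alt_entries m (A : 'M[F]_m) :
  (forall i, A i i = 0) -> (forall i j, A i j = - A j i) -> alternating A.
Proof.
move=> hd hs.
pose L := \matrix_(i, j) (if (j < i)%N then A i j else 0) : 'M[F]_m.
suff -> : A = L - L^T by apply: alt_KKt.
apply/matrixP=> i j; rewrite !mxE.
case: (ltnP j i) => h1; case: (ltnP i j) => h2.
- by exfalso; lia.
- by rewrite subr0.
- by rewrite sub0r hs.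
- have e : i = j by apply: val_inj => /=; lia.
  by rewrite e hd subrr.
Qed.

Lemma nondegP m (A : 'M[F]_m) :
  Defs.nondegenerate A <-> (forall x : 'rV_m, x *m A = 0 -> x = 0).
Proof.
split=> h x hx.
- apply: h => y; by rewrite /bform hx mul0mx mxE.
- apply: h; apply/rowP=> j; rewrite [RHS]mxE.
  have := hx (delta_mx 0 j); rewrite /bform trmx_delta -colE.
  by rewrite [X in X = _ -> _]mxE.
Qed.

Lemma nondeg_unit m (A : 'M[F]_m) : Defs.nondegenerate A <-> A \in unitmx.
Proof.
rewrite nondegP unitmxE unitfE; split.
- move=> h; apply/negP => /det0P [v nv hv]; by rewrite (h _ hv) eqxx in nv.
- move=> hd x hx; apply/eqP; apply: contraNT hd => nx.
  by apply/det0P; exists x.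
Qed.

Lemma inv_alt m (X : 'M[F]_m) : alternating X -> X \in unitmx -> alternating (invmx X).
Proof.
move=> hX hu x; rewrite -bform_tr; have := hX (x *m invmx X).
rewrite /bform trmx_mul -!mulmxA (mulmxA (invmx X)) mulVmx // mul1mx => h.
exact: h.
Qed.

Lemma tr_pair m (u v : 'rV[F]_m) (X : 'M[F]_m) : (u *m X *m v^T) 0 0 = (v *m X^T *m u^T) 0 0.
Proof. exact: (esym (bform_tr X v u)). Qed.

End Basics.
Section Cong.
Variable F : fieldType.

Definition cong m (P : 'M[F]_m) (B : 'M[F]_m) := P *m B *m P^T.
Fact cong_is_semilinear m (P : 'M[F]_m) : semilinear (cong P).
Proof.
split=> [a A|A1 A2]; rewrite /cong.
  by rewrite scalemxAl scalemxAr.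
by rewrite mulmxDr mulmxDl.
Qed.
HB.instance Definition _ m (P : 'M[F]_m) :=
  GRing.isSemilinear.Build F 'M[F]_m 'M[F]_m _ (cong P) (cong_is_semilinear P).

Lemma bform_cong m (P B : 'M[F]_m) x y : bform (cong P B) x y = bform B (x *m P) (y *m P).
Proof. by rewrite /bform /cong trmx_mul !mulmxA. Qed.

Lemma cong_alt m (P B : 'M[F]_m) : alternating B -> alternating (cong P B).
Proof. by move=> hB x; rewrite bform_cong hB. Qed.

Lemma cong_nondeg m (P B : 'M[F]_m) : P \in unitmx ->
  Defs.nondegenerate B -> Defs.nondegenerate (cong P B).
Proof.
move=> hP hB x hx.
have : x *m P = 0.
  apply: hB => y; have := hx (y *m invmx P).
  by rewrite bform_cong mulmxKV.
by move=> h; rewrite -(mulmxK hP x) h mul0mx.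
Qed.

Lemma cong_inj m (P : 'M[F]_m) B : P \in unitmx -> cong P B = 0 -> B = 0.
Proof.
move=> hP hc; have := congr1 (fun X => invmx P *m X *m invmx P^T) hc.
rewrite /cong /= mulmx0 mul0mx !mulmxA mulVmx // mul1mx -mulmxA mulmxV ?unitmx_tr //.
by rewrite mulmx1.
Qed.

Lemma cong_transfer m (P : 'M[F]_m) (A0 : 'M[F]_m) (W : {vspace 'M[F]_m}) :
  P \in unitmx ->
  (forall B, B \in W -> alternating B) -> alternating A0 ->
  symplectic_affine A0 W ->
  let W' := (linfun (cong P) @: W)%VS in
  [/\ (forall B, B \in W' -> alternating B), alternating (cong P A0),
      symplectic_affine (cong P A0) W' & \dim W' = \dim W].
Proof.
move=> hP hW hA hS W'; split.
- move=> B /memv_imgP [B0 hB0 ->]; rewrite lfunE /=; exact: cong_alt (hW _ hB0).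
- exact: cong_alt.
- move=> B /memv_imgP [B0 hB0 ->]; rewrite lfunE /=.
  have [h1 h2] := hS _ hB0.
  rewrite -linearD /=; split; first exact: cong_alt.
  exact: cong_nondeg.
- apply: limg_dim_eq; apply/eqP; rewrite -subv0; apply/subvP => B.
  rewrite memv_cap memv_ker lfunE /= memv0 => /andP [_ /eqP h].
  by apply/eqP; apply: cong_inj h.
Qed.

End Cong.
Section Index.
Variable F : fieldType.

Definition o1 {k} : 'I_(k.+2) := lift ord0 ord0.
Definition rs {k} (j : 'I_k) : 'I_(k.+2) := lift ord0 (lift ord0 j).

Lemma sum3 k (G : 'I_(k.+2) -> F) :
  \sum_(a < k.+2) G a = G ord0 + G o1 + \sum_(j < k) G (rs j).
Proof. by rewrite big_ord_recl big_ord_recl addrA. Qed.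

Lemma ord3P k (a : 'I_(k.+2)) : [\/ a = ord0, a = o1 | exists j, a = rs j].
Proof.
case: (unliftP ord0 a) => [b ->|->]; last by constructor 1.
case: (unliftP ord0 b) => [c ->|->]; last by constructor 2.
by constructor 3; exists c.
Qed.

Lemma rs_neq0 k (j : 'I_k) : (rs j == ord0) = false.
Proof. by apply/negbTE; rewrite eq_sym neq_lift. Qed.
Lemma rs_neq1 k (j : 'I_k) : (rs j == o1) = false.
Proof. by rewrite /rs /o1 (inj_eq lift_inj) eq_sym; apply/negbTE; rewrite neq_lift. Qed.
Lemma o1_neq0 k : (@o1 k == ord0) = false.
Proof. by apply/negbTE; rewrite eq_sym neq_lift. Qed.
Lemma rs_eq k (j l : 'I_k) : (rs j == rs l) = (j == l).
Proof. by rewrite /rs !(inj_eq lift_inj). Qed.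

Lemma kernel_unit m (Q : 'M[F]_m) : (forall x : 'rV_m, x *m Q = 0 -> x = 0) -> Q \in unitmx.
Proof. by move=> h; apply/nondeg_unit; apply/nondegP. Qed.

Lemma col_complete n (r : 'rV[F]_n) (a : 'I_n) : r != 0 ->
  exists Q : 'M[F]_n, [/\ Q \in unitmx, forall i, Q i a = r 0 i &
     forall i l, r 0 i = 0 -> i != a -> Q i l = (i == l)%:R].
Proof.
move=> nr.
have [j hj] : exists j, r 0 j != 0.
  apply/existsP; apply: contraNT nr; rewrite negb_exists => /forallP h.
  by apply/eqP/rowP=> j; rewrite mxE; apply/eqP; move: (h j); rewrite negbK.
pose Q := \matrix_(i, l) (if l == a then r 0 i else if l == j then (i == a)%:R
                           else (i == l)%:R) : 'M[F]_n.
exists Q; split.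
- apply: kernel_unit => x hx.
  have hxl l : (x *m Q) 0 l = 0 by rewrite hx mxE.
  have hne : forall i, i != j -> x 0 i = 0.
    move=> i hij; case: (eqVneq i a) => hia.
    + have hja : j != a by rewrite eq_sym -hia.
      have := hxl j; rewrite mxE (bigD1 a) //= big1 ?addr0.
        by rewrite mxE (negbTE hja) !eqxx mulr1 hia.
      by move=> i' hi'; rewrite mxE (negbTE hja) eqxx (negbTE hi') mulr0.
    + have := hxl i; rewrite mxE (bigD1 i) //= big1 ?addr0.
        by rewrite mxE (negbTE hia) (negbTE hij) eqxx mulr1.
      by move=> i' hi'; rewrite mxE (negbTE hia) (negbTE hij) (negbTE hi') mulr0.
  have hxj : x 0 j = 0.
    have := hxl a; rewrite mxE (bigD1 j) //= big1 ?addr0.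
      by rewrite mxE eqxx => /eqP; rewrite mulf_eq0 (negbTE hj) orbF => /eqP.
    by move=> i hi; rewrite (hne i hi) mul0r.
  apply/rowP=> i; rewrite mxE; case: (eqVneq i j) => [->|h]; by [rewrite hxj | rewrite hne].
- by move=> i; rewrite mxE eqxx.
- move=> i l hri hia; rewrite mxE.
  case: (eqVneq l a) => [->|hla]; first by rewrite hri (negbTE hia).
  case: (eqVneq l j) => [->|hlj]; last by [].
  rewrite (negbTE hia); case: (eqVneq i j) => [hij|//].
  by rewrite -hij hri eqxx in hj.
Qed.

Lemma normalize k (A0 : 'M[F]_(k.+2)) : Defs.nondegenerate A0 -> alternating A0 ->
  exists P : 'M[F]_(k.+2), P \in unitmx /\
    forall l, cong P A0 ord0 l = (l == o1)%:R.
Proof.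
move=> hN hA.
pose r := row ord0 A0.
have nr : r != 0.
  apply/eqP=> hr.
  have h0 : delta_mx 0 ord0 = 0 :> 'rV[F]_(k.+2).
    by move/nondegP: hN; apply; rewrite -rowE -/r hr.
  by move/matrixP: h0 => /(_ 0 ord0); rewrite !mxE !eqxx /= => /eqP; rewrite oner_eq0.
have [Q [hQ hQa hQi]] := col_complete o1 nr.
exists (invmx Q); split; first by rewrite unitmx_inv.
have r00 : r 0 ord0 = 0 by rewrite mxE (alt_diag hA).
have hQ0 : delta_mx 0 ord0 *m Q = delta_mx 0 ord0 :> 'rV_(k.+2).
  apply/rowP=> l; rewrite -rowE mxE (hQi _ _ r00); last by rewrite eq_sym o1_neq0.
  by rewrite mxE eqxx /= eq_sym.
have hP0 : delta_mx 0 ord0 *m invmx Q = delta_mx 0 ord0 :> 'rV_(k.+2).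
  by rewrite -{1}hQ0 mulmxK.
have hQc : Q *m delta_mx o1 0 = r^T.
  by apply/colP=> i; rewrite -colE !mxE hQa mxE.
have hPr : invmx Q *m r^T = delta_mx o1 0.
  by rewrite -hQc mulKmx.
move=> l.
have -> : cong (invmx Q) A0 ord0 l = (row ord0 (cong (invmx Q) A0)) 0 l by rewrite [RHS]mxE.
rewrite rowE /cong !mulmxA hP0 -rowE -/r.
have -> : r *m (invmx Q)^T = (invmx Q *m r^T)^T by rewrite trmx_mul trmxK.
by rewrite hPr trmx_delta mxE eqxx /=.
Qed.

End Index.
Section Maps.
Variable F : fieldType.
Variable k : nat.

Definition rho (B : 'M[F]_(k.+2)) : 'rV[F]_k := \row_j B ord0 (rs j).
Definition dlt (B : 'M[F]_(k.+2)) : 'M[F]_k := \matrix_(i, j) B (rs i) (rs j).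
Definition gam (B : 'M[F]_(k.+2)) : 'rV[F]_k := \row_j B o1 (rs j).

Fact rho_is_semilinear : semilinear rho.
Proof. by split=> [a A|A1 A2]; apply/rowP=> j; rewrite !mxE. Qed.
HB.instance Definition _ := GRing.isSemilinear.Build F _ _ _ rho rho_is_semilinear.
Fact dlt_is_semilinear : semilinear dlt.
Proof. by split=> [a A|A1 A2]; apply/matrixP=> i j; rewrite !mxE. Qed.
HB.instance Definition _ := GRing.isSemilinear.Build F _ _ _ dlt dlt_is_semilinear.
Fact gam_is_semilinear : semilinear gam.
Proof. by split=> [a A|A1 A2]; apply/rowP=> j; rewrite !mxE. Qed.
HB.instance Definition _ := GRing.isSemilinear.Build F _ _ _ gam gam_is_semilinear.

Lemma dlt_alt B : alternating B -> alternating (dlt B).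
Proof.
move=> hB; apply: alt_entries => [i|i j]; rewrite !mxE; first exact: alt_diag.
exact: alt_skew.
Qed.

Definition ext3 (c0 c1 : F) (x : 'rV[F]_k) : 'rV[F]_(k.+2) :=
  \row_a (match unlift ord0 a with None => c0
          | Some b => match unlift ord0 b with None => c1 | Some j => x 0 j end end).

Lemma ext3_0 c0 c1 x : ext3 c0 c1 x 0 ord0 = c0.
Proof. by rewrite mxE unlift_none. Qed.
Lemma ext3_1 c0 c1 x : ext3 c0 c1 x 0 o1 = c1.
Proof. by rewrite mxE /o1 liftK unlift_none. Qed.
Lemma ext3_rs c0 c1 x j : ext3 c0 c1 x 0 (rs j) = x 0 j.
Proof. by rewrite mxE /rs !liftK. Qed.

Lemma sum_ext3 c0 c1 x (G : 'I_(k.+2) -> F) :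
  \sum_a ext3 c0 c1 x 0 a * G a = c0 * G ord0 + c1 * G o1 + \sum_j x 0 j * G (rs j).
Proof. by rewrite sum3 ext3_0 ext3_1; congr (_ + _); apply: eq_bigr => j _; rewrite ext3_rs. Qed.

Definition normal (A : 'M[F]_(k.+2)) := forall l, A ord0 l = (l == o1)%:R.

Lemma reduce_nondeg C : alternating C -> normal C -> Defs.nondegenerate C ->
  Defs.nondegenerate (dlt C).
Proof.
move=> hA hn /nondegP hN; apply/nondegP => x hx.
pose z0 := - \sum_j x 0 j * C (rs j) o1.
have hz : ext3 z0 0 x *m C = 0.
  apply/rowP=> l; rewrite mxE [RHS]mxE sum_ext3 mul0r addr0.
  case: (ord3P l) => [->| ->|[l' ->]].
  - rewrite (alt_diag hA) mulr0 add0r big1 // => j _.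
    by rewrite (alt_skew hA) hn rs_neq1 oppr0 mulr0.
  - by rewrite hn eqxx mulr1 /z0 addNr.
  - rewrite hn rs_neq1 mulr0 add0r.
    move/rowP: hx => /(_ l'); rewrite !mxE => hx'.
    by rewrite -[RHS]hx'; apply: eq_bigr => j _; rewrite !mxE.
have := hN _ hz => /rowP hz0.
by apply/rowP=> j; move: (hz0 (rs j)); rewrite ext3_rs !mxE.
Qed.

End Maps.
Section Perp.
Variable F : fieldType.

Lemma row_free_ker m n (A : 'M[F]_(m, n)) :
  (forall c : 'rV_m, c *m A = 0 -> c = 0) -> row_free A.
Proof.
move=> h; rewrite -kermx_eq0; apply/eqP/row_matrixP=> i.
by rewrite row0; apply: h; rewrite -row_mul mulmx_ker row0.
Qed.

Definition basis_mx k (U : {vspace 'rV[F]_k}) : 'M[F]_(\dim U, k) :=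
  \matrix_(i < \dim U) (vbasis U)`_i.

Lemma basis_mx_row k (U : {vspace 'rV[F]_k}) i : row i (basis_mx U) = (vbasis U)`_i.
Proof. by rewrite rowK. Qed.

Lemma basis_mx_rank k (U : {vspace 'rV[F]_k}) : \rank (basis_mx U) = \dim U.
Proof.
apply/eqP; apply: row_free_ker => c hc.
have hfree := basis_free (vbasisP U).
move/freeP: hfree => /(_ (fun i => c 0 i)) hf.
apply/rowP=> i; rewrite mxE; apply: hf.
by rewrite -[RHS]hc mulmx_sum_row; apply: eq_bigr => j _; rewrite basis_mx_row.
Qed.

Lemma perp_dim k (U V : {vspace 'rV[F]_k}) (M : 'M[F]_k) : M \in unitmx ->
  (forall u v, u \in U -> v \in V -> (u *m M *m v^T) 0 0 = 0) ->
  (\dim U + \dim V <= k)%N.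
Proof.
move=> hM huv.
set MU := basis_mx U; set MV := basis_mx V.
have h0 : MV *m (MU *m M)^T = 0.
  apply/matrixP=> i j; rewrite [RHS]mxE.
  have := huv _ _ (vbasis_mem (mem_nth 0 (_ : (j < size (vbasis U))%N)))
                  (vbasis_mem (mem_nth 0 (_ : (i < size (vbasis V))%N))).
  rewrite !size_tuple => /(_ (ltn_ord j) (ltn_ord i)).
  rewrite -!basis_mx_row -/MU -/MV => <-.
  rewrite !mxE; apply: eq_bigr => l _; rewrite !mxE mulrC; congr (_ * _).
  by apply: eq_bigr => l' _; rewrite !mxE.
have hs : (MV <= kermx (MU *m M)^T)%MS by apply/sub_kermxP.
have := mxrankS hs; rewrite mxrank_ker mxrank_tr mxrankMfree ?row_free_unit //.
have hU : (\dim U <= k)%N by have := dimvS (subvf U); rewrite dimvf dim_matrix; lia.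
rewrite /MU /MV !basis_mx_rank; lia.
Qed.

End Perp.
Section PolyDet.
Variable F : fieldType.

Lemma size_prod2 (I : Type) (r : seq I) (f : I -> {poly F}) :
  (forall i, (size (f i) <= 2)%N) -> (size (\prod_(i <- r) f i)%R <= (size r).+1)%N.
Proof.
move=> hf; elim: r => [|x r IH]; first by rewrite big_nil size_poly1.
rewrite big_cons /=; apply: leq_trans (size_polyMleq _ _) _.
have := hf x; move: IH; move: (size (\prod_(j <- r) f j)%R) (size (f x)) => u v; lia.
Qed.

Lemma det_size2 n (M : 'M[{poly F}]_n) :
  (forall i j, (size (M i j) <= 2)%N) -> (size (\det M) <= n.+1)%N.
Proof.
move=> hM; rewrite /determinant; apply: leq_trans (size_sum _ _ _) _.
apply/bigmax_leqP => s _; rewrite size_Msign.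
have -> : n.+1 = (size (index_enum 'I_n)).+1.
  by rewrite /index_enum -enumT size_enum_ord.
by apply: size_prod2 => i; apply: hM.
Qed.

Lemma det_size_row n (M : 'M[{poly F}]_n) (a : 'I_n) :
  (forall i j, (size (M i j) <= 2)%N) -> (forall j, (size (M a j) <= 1)%N) ->
  (size (\det M) <= n)%N.
Proof.
case: n M a => [|n] M a; first by case: a.
move=> hM ha; rewrite (expand_det_row _ a); apply: leq_trans (size_sum _ _ _) _.
apply/bigmax_leqP => j _; apply: leq_trans (size_polyMleq _ _) _.
rewrite /cofactor size_Msign.
have hmin : (size (\det (row' a (col' j M))) <= n.+1)%N.
  by apply: det_size2 => i l; rewrite !mxE; apply: hM.
have := ha j; move: hmin.
move: (size (\det (row' a (col' j M)))) (size (M a j)) => u v; lia.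
Qed.

End PolyDet.
Section Ortho.
Variables (F : fieldType) (k : nat) (A0 : 'M[F]_(k.+2)) (W : {vspace 'M[F]_(k.+2)}).
Hypotheses (hn : normal A0) (hA : alternating A0)
  (hW : forall B, B \in W -> alternating B) (hS : symplectic_affine A0 W).
Variables (B N : 'M[F]_(k.+2)).
Hypotheses (hB : B \in W) (hN : N \in W) (hN0 : forall l, N ord0 l = 0) (hNd : dlt N = 0).

Let g := gam N.

Lemma N_o1rs j : N o1 (rs j) = g 0 j. Proof. by rewrite mxE. Qed.
Lemma N_rso1 j : N (rs j) o1 = - g 0 j. Proof. by rewrite (alt_skew (hW hN)) N_o1rs. Qed.
Lemma N_rsrs i j : N (rs i) (rs j) = 0.
Proof. by move/matrixP: hNd => /(_ i j); rewrite !mxE. Qed.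
Lemma N_a0 a : N a ord0 = 0. Proof. by rewrite (alt_skew (hW hN)) hN0 oppr0. Qed.
Lemma N_o1o1 : N o1 o1 = 0. Proof. exact: (alt_diag (hW hN)). Qed.

Lemma alt_sum (X Y : 'M[F]_(k.+2)) : alternating X -> alternating Y -> alternating (X + Y).
Proof. by move=> hX hY x; rewrite /bform mulmxDr mulmxDl mxE -!/(bform _ _ _) hX hY addr0. Qed.

Lemma alt_scale (c : F) (X : 'M[F]_(k.+2)) : alternating X -> alternating (c *: X).
Proof. by move=> hX x; rewrite /bform -scalemxAr -scalemxAl mxE -/(bform _ _ _) hX mulr0. Qed.

Section Mu.
Variable mu : F.
Let C := A0 + mu *: B.
Let e1 : 'rV[F]_(k.+2) := delta_mx 0 o1.
Let w := e1 *m invmx C.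

Lemma C_sympl : symplectic C.
Proof. by apply: hS; rewrite memvZ. Qed.

Lemma C_unit : C \in unitmx.
Proof. by apply/nondeg_unit; case: C_sympl. Qed.

Lemma wC : w *m C = e1.
Proof. by rewrite /w mulmxKV ?C_unit. Qed.

Lemma w_neq0 : w != 0.
Proof.
apply/eqP=> h; have := wC; rewrite h mul0mx => /matrixP /(_ 0 o1).
by rewrite !mxE !eqxx => /eqP; rewrite eq_sym oner_eq0.
Qed.

Lemma w_o1 : w 0 o1 = 0.
Proof.
have [hC _] := C_sympl; have := hC w; rewrite /bform wC /e1 -rowE !mxE.
by move=> h; exact: h.
Qed.

Lemma wN : w *m N = - (\sum_j w 0 (rs j) * g 0 j) *: e1.
Proof.
apply/rowP=> l; rewrite !mxE sum3 hN0 mulr0 add0r w_o1 mul0r add0r.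
case: (ord3P l) => [->| ->|[l' ->]].
- rewrite big1 ?eqxx ?o1_neq0 /= ?mulr0 // => j _; by rewrite N_a0 mulr0.
- rewrite eqxx mulr1 -sumrN; apply: eq_bigr => j _; by rewrite N_rso1 mulrN.
- rewrite rs_neq1 mulr0 big1 // => j _; by rewrite N_rsrs mulr0.
Qed.

Lemma w_perp : \sum_j w 0 (rs j) * g 0 j = 0.
Proof.
apply/eqP/negP => /negP nq.
set q := \sum_j _ in nq.
have hW' : mu *: B + q^-1 *: N \in W by rewrite memvD ?memvZ.
have [_ /nondegP hN'] := hS hW'.
have : w = 0.
  apply: hN'; rewrite addrA -/C mulmxDr wC -scalemxAr wN scalerA.
  by rewrite mulrN mulVf // scaleN1r subrr.
by apply/eqP; rewrite w_neq0.
Qed.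

End Mu.
Lemma ext3_eta (z : 'rV[F]_(k.+2)) : z = ext3 (z 0 ord0) (z 0 o1) (\row_j z 0 (rs j)).
Proof.
apply/rowP=> b; case: (ord3P b) => [->| ->|[j ->]].
- by rewrite ext3_0.
- by rewrite ext3_1.
- by rewrite ext3_rs mxE.
Qed.

Variables (a : 'I_k) (Q : 'M[F]_k).
Hypotheses (hQ : Q \in unitmx) (hQa : forall i, Q i a = g 0 i).
Let S := invmx Q.

Definition Umx : 'M[F]_(k, k.+2) :=
  \matrix_(i < k) (if i == a then (delta_mx 0 ord0 : 'rV[F]_(k.+2)) else ext3 0 0 (row i S)).

Lemma UmxE i b : Umx i b = if i == a then (b == ord0)%:R else ext3 0 0 (row i S) 0 b.
Proof. by rewrite mxE; case: (i == a); rewrite // mxE eqxx. Qed.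

Lemma U_o1 i : Umx i o1 = 0.
Proof. by rewrite UmxE o1_neq0 ext3_1; case: (i == a). Qed.

Definition ytil (y : 'rV[F]_k) : 'rV[F]_k := \row_i (if i == a then 0 else y 0 i).

Lemma yU_0 (y : 'rV[F]_k) : (y *m Umx) 0 ord0 = y 0 a.
Proof.
rewrite mxE (bigD1 a) //= big1 ?addr0; first by rewrite UmxE eqxx eqxx mulr1.
by move=> i /negbTE hi; rewrite UmxE hi ext3_0 mulr0.
Qed.

Lemma yU_1 (y : 'rV[F]_k) : (y *m Umx) 0 o1 = 0.
Proof. by rewrite mxE big1 // => i _; rewrite U_o1 mulr0. Qed.

Lemma yU_rs (y : 'rV[F]_k) : \row_j (y *m Umx) 0 (rs j) = ytil y *m S.
Proof.
apply/rowP=> j; rewrite [LHS]mxE [LHS]mxE [RHS]mxE; apply: eq_bigr => i _.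
rewrite UmxE [ytil _ 0 i]mxE.
by case: (i == a); rewrite ?rs_neq0 ?mul0r ?mulr0 // ext3_rs mxE.
Qed.

Lemma ytil_id (y : 'rV[F]_k) : y 0 a = 0 -> ytil y = y.
Proof. by move=> h; apply/rowP=> i; rewrite mxE; case: eqP => // ->. Qed.

Lemma SQ : S *m Q = 1%:M. Proof. by rewrite mulVmx. Qed.
Lemma QS : Q *m S = 1%:M. Proof. by rewrite mulmxV. Qed.

Lemma Qcol : Q *m delta_mx a 0 = g^T.
Proof. by apply/colP=> i; rewrite -colE !mxE hQa mxE. Qed.

Definition Ash : 'M[F]_(k.+2) :=
  \matrix_(b, c) (if (b == ord0) || (c == ord0) then B b c else A0 b c).
Definition Bfl : 'M[F]_(k.+2) :=
  \matrix_(b, c) (if (b == ord0) || (c == ord0) then 0 else B b c).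
Definition Mmu (mu : F) := Ash + mu *: Bfl.

Lemma A0_0rs l : A0 ord0 (rs l) = 0. Proof. by rewrite hn rs_neq1. Qed.
Lemma A0_rs0 l : A0 (rs l) ord0 = 0. Proof. by rewrite (alt_skew hA) A0_0rs oppr0. Qed.

Lemma Mmu_00 mu : Mmu mu ord0 ord0 = 0.
Proof. by rewrite !mxE eqxx /= (alt_diag (hW hB)) mulr0 addr0. Qed.
Lemma Mmu_rs0 mu j : Mmu mu (rs j) ord0 = B (rs j) ord0.
Proof. by rewrite !mxE eqxx orbT /= mulr0 addr0. Qed.
Lemma Mmu_0rs mu l : Mmu mu ord0 (rs l) = B ord0 (rs l).
Proof. by rewrite !mxE eqxx /= mulr0 addr0. Qed.
Lemma Mmu_rsrs mu i l : Mmu mu (rs i) (rs l) = A0 (rs i) (rs l) + mu * B (rs i) (rs l).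
Proof. by rewrite !mxE !rs_neq0. Qed.

Lemma Ykernel mu : mu != 0 -> \det (Umx *m Mmu mu *m Umx^T) = 0.
Proof.
move=> hmu; apply/eqP/det0P.
move: (wC mu) (w_o1 mu) (w_neq0 mu) (w_perp mu).
set w := _ *m invmx _ => hwC hw1 hwn hwp; clearbody w.
pose wr := \row_j w 0 (rs j).
pose c := wr *m Q.
have hc : c 0 a = 0.
  rewrite mxE; under eq_bigr => j _ do rewrite hQa mxE; exact: hwp.
pose y' := \row_i (if i == a then mu * w 0 ord0 else c 0 i).
have hy'U : y' *m Umx = ext3 (mu * w 0 ord0) 0 wr.
  rewrite [LHS]ext3_eta yU_0 yU_1 yU_rs mxE eqxx; congr ext3.
  have -> : ytil y' = c.
    apply/rowP=> i; rewrite /ytil mxE /y' mxE.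
    by case: eqP => [->|//]; rewrite hc.
  by rewrite /c -mulmxA QS mulmx1.
exists y'.
  apply/eqP=> h0; move: hwn; apply/negP; rewrite negbK.
  have h1 : ext3 (mu * w 0 ord0) 0 wr = 0 by rewrite -hy'U h0 mul0mx.
  apply/eqP/rowP=> b; rewrite [RHS]mxE; case: (ord3P b) => [->| ->|[j ->]].
  - have := congr1 (fun v : 'rV_(k.+2) => v 0 ord0) h1.
    rewrite /= ext3_0 mxE => /eqP; rewrite mulf_eq0 (negbTE hmu) /=.
    by move/eqP.
  - exact: hw1.
  - by move/rowP: h1 => /(_ (rs j)); rewrite ext3_rs !mxE.
rewrite !mulmxA hy'U.
have hv0 : (ext3 (mu * w 0 ord0) 0 wr *m Mmu mu) 0 ord0 = 0.
  have h : (w *m (A0 + mu *: B)) 0 ord0 = 0 by rewrite hwC mxE.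
  rewrite mxE sum3 hw1 mul0r addr0 !mxE (alt_diag hA) (alt_diag (hW hB)) in h.
  rewrite mulr0 addr0 mulr0 add0r in h.
  rewrite mxE sum_ext3 mul0r addr0 Mmu_00 mulr0 add0r.
  apply: (mulfI hmu); rewrite mulr0 -[RHS]h mulr_sumr; apply: eq_bigr => j _.
  by rewrite Mmu_rs0 !mxE A0_rs0 add0r mulrCA.
have hvrs l : (ext3 (mu * w 0 ord0) 0 wr *m Mmu mu) 0 (rs l) = 0.
  have h : (w *m (A0 + mu *: B)) 0 (rs l) = 0 by rewrite hwC mxE rs_neq1 andbF.
  rewrite mxE sum3 hw1 mul0r addr0 in h.
  rewrite mxE sum_ext3 mul0r addr0 -[RHS]h Mmu_0rs; congr (_ + _).
    by rewrite !mxE A0_0rs add0r !mulrA (mulrC mu).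
  by apply: eq_bigr => j _; rewrite Mmu_rsrs !mxE.
apply/rowP=> i; rewrite [RHS]mxE mxE sum3 hv0 mul0r add0r.
rewrite [Umx^T o1 i]mxE U_o1 mulr0 add0r big1 // => l _.
by rewrite hvrs mul0r.
Qed.
Lemma rowa_U : row a Umx = delta_mx 0 ord0.
Proof. by rewrite rowK eqxx. Qed.

Definition Y0 := Umx *m Ash *m Umx^T.
Definition Y1 := Umx *m Bfl *m Umx^T.

Lemma Y1_a j : Y1 a j = 0.
Proof.
have : row a Y1 = 0.
  rewrite /Y1 !row_mul rowa_U -rowE.
  have -> : row ord0 Bfl = 0 by apply/rowP=> l; rewrite !mxE eqxx.
  by rewrite !mul0mx.
by move/rowP => /(_ j); rewrite !mxE.
Qed.

Lemma UMU mu : Umx *m Mmu mu *m Umx^T = Y0 + mu *: Y1.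
Proof. by rewrite /Mmu mulmxDr mulmxDl /Y0 /Y1 -!scalemxAr -scalemxAl. Qed.

Definition Yp : 'M[{poly F}]_k := \matrix_(i, j) ((Y0 i j)%:P + (Y1 i j)%:P * 'X).

Lemma Yp_eval mu : (\det Yp).[mu] = \det (Umx *m Mmu mu *m Umx^T).
Proof.
rewrite -horner_evalE -det_map_mx UMU; congr (\det _).
by apply/matrixP=> i j; rewrite !mxE rmorphD rmorphM /= !horner_evalE hornerX !hornerC mulrC.
Qed.

Lemma Y0_det (s : seq F) : uniq s -> (k.+1 <= size s)%N -> \det Y0 = 0.
Proof.
move=> us hsz.
pose s' := filter (predC (pred1 0)) s.
have us' : uniq s' by apply: filter_uniq.
have hs' : (k <= size s')%N.
  rewrite size_filter; have := count_predC (pred1 0) s.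
  have := count_uniq_mem 0 us; move: hsz.
  move: (count (pred1 0) s) (count (predC (pred1 0)) s) (size s) => u v w.
  case: (0 \in s) => /= ? -> ?; lia.
have hp : \det Yp = 0.
  apply: (roots_geq_poly_eq0 (rs := s')) => //.
  - apply/allP => x; rewrite mem_filter /= => /andP [hx _].
    by rewrite /root Yp_eval Ykernel.
  - apply: leq_trans hs'; apply: det_size_row (a) _ _ => [i j|j].
      rewrite mxE; apply: leq_trans (size_polyD _ _) _.
      rewrite geq_max; apply/andP; split; first exact: leq_trans (size_polyC_leq1 _) _.
      apply: leq_trans (size_polyMleq _ _) _; rewrite size_polyX.
      by have := size_polyC_leq1 (Y1 i j); move: (size _) => u; lia.
    by rewrite mxE Y1_a mul0r addr0 size_polyC_leq1.
have := Yp_eval 0; rewrite hp horner0 UMU scale0r addr0 => h.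
by rewrite -h.
Qed.
Lemma mulrow3 n (z : 'rV[F]_(k.+2)) (X : 'M[F]_(k.+2, n)) b :
  (z *m X) 0 b = z 0 ord0 * X ord0 b + z 0 o1 * X o1 b + \sum_j z 0 (rs j) * X (rs j) b.
Proof. by rewrite mxE sum3. Qed.

Lemma U_a0 : Umx a ord0 = 1. Proof. by rewrite UmxE !eqxx. Qed.
Lemma U_ars l : Umx a (rs l) = 0. Proof. by rewrite UmxE eqxx rs_neq0. Qed.
Lemma U_i0 i : i != a -> Umx i ord0 = 0. Proof. by move/negbTE=> h; rewrite UmxE h ext3_0. Qed.
Lemma U_irs i l : i != a -> Umx i (rs l) = S i l.
Proof. by move/negbTE=> h; rewrite UmxE h ext3_rs mxE. Qed.

Lemma mulUt (v : 'rV[F]_(k.+2)) i :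
  (v *m Umx^T) 0 i = v 0 ord0 * Umx i ord0 + v 0 o1 * Umx i o1 + \sum_l v 0 (rs l) * Umx i (rs l).
Proof.
rewrite mulrow3; congr (_ + _ + _); rewrite ?mxE //.
by apply: eq_bigr => l _; rewrite mxE.
Qed.

Lemma Ash_0b b : Ash ord0 b = B ord0 b. Proof. by rewrite mxE eqxx. Qed.
Lemma Ash_b0 b : Ash b ord0 = B b ord0. Proof. by rewrite mxE eqxx orbT. Qed.
Lemma Ash_rsrs i l : Ash (rs i) (rs l) = A0 (rs i) (rs l). Proof. by rewrite mxE !rs_neq0. Qed.

Lemma mx11_eq0 (X : 'M[F]_1) : X 0 0 = 0 -> X = 0.
Proof. by move=> h; apply/matrixP=> i j; rewrite !ord1 h mxE. Qed.

Lemma ortho_core (s : seq F) : uniq s -> (k.+1 <= size s)%N ->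
  (rho B *m invmx (dlt A0) *m g^T) 0 0 = 0.
Proof.
move=> us hsz.
have hA0N : Defs.nondegenerate A0.
  by have := @hS 0 (mem0v W); rewrite addr0; case.
have hD : dlt A0 \in unitmx by apply/nondeg_unit; exact: reduce_nondeg.
have hDa : alternating (dlt A0) := dlt_alt hA.
have hDi := inv_alt hDa hD.
have hD0' l j : A0 (rs l) (rs j) = dlt A0 l j by rewrite mxE.
have := Y0_det us hsz => /eqP /det0P [y ny hy].
have hz0 := yU_0 y; have hz1 := yU_1 y; have hzr := yU_rs y.
have hv : y *m Umx *m Ash *m Umx^T = 0 by rewrite -hy /Y0 !mulmxA.
move: hz0 hz1 hzr hv; set z := y *m Umx => hz0 hz1 hzr hv.
set zr := \row_j z 0 (rs j) in hzr.
set h := rho B.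
have hh j : B ord0 (rs j) = h 0 j by rewrite mxE.
have hzg : (zr *m g^T) 0 0 = 0.
  rewrite hzr -Qcol mulmxA -(mulmxA _ S Q) SQ mulmx1 -colE !mxE.
  by rewrite eqxx.
have hzrj j : zr 0 j = z 0 (rs j) by rewrite mxE.
clearbody h zr z.
have hv0e : (z *m Ash) 0 ord0 = - (zr *m h^T) 0 0.
  rewrite mulrow3 hz1 mul0r addr0 Ash_b0 (alt_diag (hW hB)) mulr0 add0r.
  rewrite mxE -sumrN; apply: eq_bigr => j _.
  by rewrite Ash_b0 (alt_skew (hW hB)) hh mxE hzrj mulrN.
have hvre l : (z *m Ash) 0 (rs l) = z 0 ord0 * h 0 l + (zr *m dlt A0) 0 l.
  rewrite mulrow3 hz1 mul0r addr0 Ash_0b hh; congr (_ + _).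
  by rewrite mxE; apply: eq_bigr => j _; rewrite Ash_rsrs hD0' hzrj.
move: (z *m Ash) hv0e hvre hv => v hv0e hvre hv.
have hva i : (v *m Umx^T) 0 i = 0 by rewrite hv mxE.
have hv0 : v 0 ord0 = 0.
  have := hva a; rewrite mulUt U_a0 U_o1 mulr1 mulr0 addr0 big1 ?addr0 //.
  by move=> l _; rewrite U_ars mulr0.
pose vr := \row_l v 0 (rs l).
have hvS : vr *m S^T = (vr *m S^T) 0 a *: delta_mx 0 a.
  apply/rowP=> i; rewrite [RHS]mxE [delta_mx _ _ _ _]mxE eqxx /=.
  case: (eqVneq i a) => [->|hia]; first by rewrite mulr1.
  rewrite mulr0; have := hva i; rewrite mulUt U_i0 // U_o1 !mulr0 !add0r => <-.
  by rewrite mxE; apply: eq_bigr => l _; rewrite mxE [S^T _ _]mxE U_irs.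
move: hvS; set ga := (vr *m S^T) 0 a => hvS.
have eQ : delta_mx 0 a *m Q^T = g by rewrite -trmx_delta -trmx_mul Qcol trmxK.
have hSu : S \in unitmx by rewrite unitmx_inv.
have hvr : vr = ga *: g.
  have : vr = (vr *m S^T) *m invmx S^T by rewrite mulmxK // unitmx_tr.
  by rewrite hvS -scalemxAl -trmx_inv invmxK eQ.
have hrel : z 0 ord0 *: h + zr *m dlt A0 = ga *: g.
  rewrite -hvr; apply/rowP=> l; rewrite mxE [(_ *: h) 0 l]mxE [vr 0 l]mxE hvre.
  by [].
have hzh : (zr *m h^T) 0 0 = 0 by rewrite -[LHS]opprK -hv0e hv0 oppr0.
move: hDi; set Di := invmx (dlt A0) => hDi.
have hgg : g *m Di *m g^T = 0 by apply: mx11_eq0; exact: hDi.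
have hskew (u w : 'rV[F]_k) : (u *m Di *m w^T) 0 0 = - (w *m Di *m u^T) 0 0.
  by rewrite tr_pair (alt_tr hDi) mulmxN mulNmx [LHS]mxE.
case: (eqVneq (z 0 ord0) 0) => hz0'.
- rewrite hz0' scale0r add0r in hrel.
  have nzr : zr != 0.
    apply/eqP=> hzr0; move/eqP: ny; apply.
    have hyt : ytil y = 0.
      by have := mulmxK hSu (ytil y); rewrite -hzr hzr0 mul0mx => <-.
    have hya : y 0 a = 0 by rewrite -hz0 hz0'.
    by rewrite -(ytil_id hya) hyt.
  have hga : ga != 0.
    apply/eqP=> hg0; move/eqP: nzr; apply.
    by rewrite -(mulmxK hD zr) hrel hg0 scale0r mul0mx.
  have ezr : zr = ga *: (g *m Di) by rewrite -(mulmxK hD zr) hrel -scalemxAl.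
  have : ga * (g *m Di *m h^T) 0 0 = 0.
    by rewrite -[RHS]hzh ezr -!scalemxAl [RHS]mxE.
  move/eqP; rewrite mulf_eq0 (negbTE hga) /= => /eqP hgh.
  by rewrite hskew hgh oppr0.
- have eh : h = (z 0 ord0)^-1 *: (ga *: g - zr *m dlt A0).
    by rewrite -hrel addrK scalerA mulVf // scale1r.
  have hzg' : zr *m g^T = 0 by apply: mx11_eq0.
  rewrite eh -!scalemxAl mulmxBl mulmxBl -!scalemxAl hgg.
  by rewrite -(mulmxA zr) mulmxV // mulmx1 hzg' scaler0 subr0 scaler0 mxE.
Qed.
End Ortho.
Section Count.
Variable F : fieldType.
Variable k : nat.

Lemma row0_zero (A0 : 'M[F]_(k.+2)) (W : {vspace 'M[F]_(k.+2)}) : normal A0 -> (forall B, B \in W -> alternating B) ->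
  symplectic_affine A0 W -> forall B, B \in W -> rho B = 0 -> forall l, B ord0 l = 0.
Proof.
move=> hn hW hS B hB hr.
have hr' j : B ord0 (rs j) = 0 by move/rowP: hr => /(_ j); rewrite !mxE.
have hb1 : B ord0 o1 = 0.
  apply/eqP/negP => /negP nc.
  have hB' : (- (B ord0 o1)^-1) *: B \in W by rewrite memvZ.
  have [_ /nondegP hN] := hS _ hB'.
  have : delta_mx 0 ord0 = 0 :> 'rV[F]_(k.+2).
    apply: hN; apply/rowP=> l; rewrite -rowE !mxE hn.
    case: (ord3P l) => [->| ->|[l' ->]].
    - by rewrite eq_sym o1_neq0 (alt_diag (hW _ hB)) mulr0 addr0.
    - by rewrite eqxx mulNr mulVf // subrr.
    - by rewrite rs_neq1 hr' mulr0 addr0.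
  by move/matrixP => /(_ 0 ord0); rewrite !mxE !eqxx /= => /eqP; rewrite oner_eq0.
move=> l; case: (ord3P l) => [->| ->|[l' ->]] //; exact: (alt_diag (hW _ hB)).
Qed.

Lemma ortho (s : seq F) : uniq s -> (k.+1 <= size s)%N -> forall (A0 : 'M[F]_(k.+2)) (W : {vspace 'M[F]_(k.+2)}),
  normal A0 -> alternating A0 -> (forall B, B \in W -> alternating B) ->
  symplectic_affine A0 W ->
  forall B N, B \in W -> N \in W -> (forall l, N ord0 l = 0) -> dlt N = 0 ->
  (rho B *m invmx (dlt A0) *m (gam N)^T) 0 0 = 0.
Proof.
move=> us hsz A0 W hn hA hW hS B N hB hN hN0 hNd.
have [g0|ng] := eqVneq (gam N) 0; first by rewrite g0 trmx0 mulmx0 mxE.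
have [a _] : exists a, gam N 0 a != 0.
  apply/existsP; apply: contraNT ng; rewrite negb_exists => /forallP h.
  by apply/eqP/rowP=> j; rewrite [RHS]mxE; apply/eqP; move: (h j); rewrite negbK.
have [Q [hQ hQa _]] := col_complete a ng.
exact: (ortho_core hn hA hW hS hB hN hN0 hNd hQ hQa us hsz).
Qed.

Lemma step_normal (hk : nat) (s : seq F) : uniq s -> (k.+1 <= size s)%N ->
  forall (A0 : 'M[F]_(k.+2)) (W : {vspace 'M[F]_(k.+2)}), normal A0 -> alternating A0 -> (forall B, B \in W -> alternating B) ->
  symplectic_affine A0 W ->
  (forall (A : 'M[F]_k) (W' : {vspace 'M[F]_k}), (forall B, B \in W' -> alternating B) ->
      alternating A -> symplectic_affine A W' -> (\dim W' <= hk)%N) ->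
  (\dim W <= hk + k)%N.
Proof.
move=> us hsz A0 W hn hA hW hS IH.
pose f1 := linfun (@rho F k); pose f2 := linfun (@dlt F k); pose f3 := linfun (@gam F k).
pose K := (W :&: lker f1)%VS.
pose K2 := (f2 @: K)%VS.
pose G := (K :&: lker f2)%VS.
have e1 := limg_ker_dim f1 W.
have e2 := limg_ker_dim f2 K.
have hK B : B \in K -> B \in W /\ forall l, B ord0 l = 0.
  rewrite memv_cap memv_ker lfunE /= => /andP [hBW /eqP hr].
  by split => //; exact: (row0_zero hn hW hS hBW hr).
have hG B : B \in G -> [/\ B \in W, forall l, B ord0 l = 0 & dlt B = 0].
  rewrite memv_cap memv_ker lfunE /= => /andP [/hK [h1 h2] /eqP h3]; by split.
have e3 : \dim (f3 @: G) = \dim G.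
  apply: limg_dim_eq; apply/eqP; rewrite -subv0; apply/subvP => B.
  rewrite memv_cap memv_ker lfunE /= memv0 => /andP [/hG [hBW h0 hd] /eqP hg].
  have hBa := alt_skew (hW _ hBW).
  have h1 j : B o1 (rs j) = 0 by move/rowP: hg => /(_ j); rewrite !mxE.
  have h2 i j : B (rs i) (rs j) = 0 by move/matrixP: hd => /(_ i j); rewrite !mxE.
  apply/eqP/matrixP => a b; rewrite mxE.
  case: (ord3P a) => [->| ->|[a' ->]]; first exact: h0.
  - case: (ord3P b) => [->| ->|[b' ->]].
    + by rewrite hBa h0 oppr0.
    + exact: (alt_diag (hW _ hBW)).
    + exact: h1.
  - case: (ord3P b) => [->| ->|[b' ->]].
    + by rewrite hBa h0 oppr0.
    + by rewrite hBa h1 oppr0.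
    + exact: h2.
have hdA : Defs.nondegenerate (dlt A0).
  apply: reduce_nondeg => //; have := hS 0 (mem0v _); rewrite addr0; by case.
have hIH : (\dim K2 <= hk)%N.
  apply: (IH (dlt A0)); last 1 first.
  - move=> B2 /memv_imgP [B hB ->]; rewrite lfunE /=.
    have [hBW h0] := hK _ hB; have [hs1 hs2] := hS _ hBW.
    rewrite -linearD /=; split; first exact: dlt_alt.
    apply: reduce_nondeg => // l; by rewrite mxE h0 addr0 hn.
  - move=> B2 /memv_imgP [B hB ->]; rewrite lfunE /=.
    by apply: dlt_alt; apply: hW; case: (hK _ hB).
  - exact: dlt_alt.
have hperp : (\dim (f1 @: W) + \dim (f3 @: G) <= k)%N.
  apply: (perp_dim (M := invmx (dlt A0))); first by rewrite unitmx_inv -nondeg_unit.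
  move=> u v /memv_imgP [B hB ->] /memv_imgP [N hN ->]; rewrite !lfunE /=.
  have [hNW hN0 hNd] := hG _ hN.
  exact: (ortho us hsz hn hA hW hS hB hNW hN0 hNd).
move: e1 e2 hIH hperp; rewrite e3 -/K -/K2 -/G => <- <-.
move: (\dim G) (\dim K2) (\dim (f1 @: W)) => a b c; lia.
Qed.

End Count.
Fixpoint hb (m : nat) : nat :=
  match m with 0 => 0 | 1 => 0 | S (S m') => (hb m' + m')%N end.

Lemma hb_even n : hb (2 * n) = (n * (n - 1))%N.
Proof.
elim: n => [//|n IH]; rewrite mulnS /= IH; case: n {IH} => [//|n].
rewrite !subSS !subn0; lia.
Qed.

Section UB.
Variable F : fieldType.

Lemma UB (m : nat) (s : seq F) : uniq s -> (m.-1 <= size s)%N ->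
  forall (A0 : 'M[F]_m) (W : {vspace 'M[F]_m}),
  (forall B, B \in W -> alternating B) -> alternating A0 ->
  symplectic_affine A0 W -> (\dim W <= hb m)%N.
Proof.
elim/ltn_ind: m => -[|[|k]] IH us hsz A0 W hW hA hS.
- by have := dimvS (subvf W); rewrite dimvf dim_matrix.
- exfalso; have [_ /nondegP hN] := hS 0 (mem0v _).
  have h1 : const_mx 1 *m (A0 + 0) = 0 :> 'rV[F]_1.
    apply/rowP=> i; rewrite !ord1 !mxE big_ord1 !mxE addr0 (alt_diag hA).
    by rewrite mulr0.
  by have := hN _ h1 => /rowP /(_ ord0); rewrite !mxE => /eqP; rewrite oner_eq0.
- have [_ hN] := hS 0 (mem0v _); rewrite addr0 in hN.
  have [P [hP hPn]] := normalize hN hA.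
  have [hW' hA' hS' hd] := cong_transfer hP hW hA hS.
  rewrite -hd /=.
  apply: (step_normal us hsz hPn hA' hW' hS') => A W2 hW2 hA2 hS2.
  apply: (IH k _ us) => //.
  by move: hsz => /=; lia.
Qed.

End UB.
Section Lower.
Variable F : fieldType.
Variable n : nat.

Lemma block_nondeg (X C : 'M[F]_n) : C \in unitmx ->
  Defs.nondegenerate (block_mx X C (- C^T) 0).
Proof.
move=> hC; apply/nondegP => x hx.
have e : row_mx (lsubmx x) (rsubmx x) *m block_mx X C (- C^T) 0 = row_mx 0 0.
  by rewrite hsubmxK hx row_mx0.
move: e; rewrite mul_row_block => /eq_row_mx [h1 h2].
rewrite mulmx0 addr0 in h2.
have hu : lsubmx x = 0 by rewrite -(mulmxK hC (lsubmx x)) h2 mul0mx.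
rewrite hu mul0mx add0r mulmxN in h1.
have hv : rsubmx x = 0.
  have hCt : C^T \in unitmx by rewrite unitmx_tr.
  by rewrite -(mulmxK hCt (rsubmx x)) -[_ *m C^T]opprK h1 oppr0 mul0mx.
by rewrite -(hsubmxK x) hu hv row_mx0.
Qed.

Definition lowp (Z : 'M[F]_n) : 'M[F]_n := \matrix_(i, j) (if (j < i)%N then Z i j else 0).
Definition upp (Z : 'M[F]_n) : 'M[F]_n := \matrix_(i, j) (if (i < j)%N then Z i j else 0).
Definition KZ (Z : 'M[F]_n) : 'M[F]_(n + n) := block_mx (lowp Z) (upp Z) 0 0.
Definition Phi (Z : 'M[F]_n) : 'M[F]_(n + n) := KZ Z - (KZ Z)^T.
Definition K0 : 'M[F]_(n + n) := block_mx 0 1%:M 0 0.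
Definition LA0 : 'M[F]_(n + n) := K0 - K0^T.

Fact Phi_is_semilinear : semilinear Phi.
Proof.
split=> [c A|A1 A2]; rewrite /Phi /KZ.
  have -> : lowp (c *: A) = c *: lowp A.
    by apply/matrixP=> i j; rewrite !mxE; case: ifP; rewrite ?mulr0.
  have -> : upp (c *: A) = c *: upp A.
    by apply/matrixP=> i j; rewrite !mxE; case: ifP; rewrite ?mulr0.
  have -> : block_mx (c *: lowp A) (c *: upp A) 0 0 = c *: block_mx (lowp A) (upp A) 0 0 :> 'M_(n + n).
    by rewrite scale_block_mx !scaler0.
  by rewrite linearZ /= scalerBr.
have -> : lowp (A1 + A2) = lowp A1 + lowp A2.
  by apply/matrixP=> i j; rewrite !mxE; case: ifP; rewrite ?addr0.
have -> : upp (A1 + A2) = upp A1 + upp A2.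
  by apply/matrixP=> i j; rewrite !mxE; case: ifP; rewrite ?addr0.
have -> : block_mx (lowp A1 + lowp A2) (upp A1 + upp A2) 0 0 =
  block_mx (lowp A1) (upp A1) 0 0 + block_mx (lowp A2) (upp A2) 0 0 :> 'M_(n + n).
  by rewrite add_block_mx !addr0.
by rewrite linearD /= opprD addrACA.
Qed.
HB.instance Definition _ := GRing.isSemilinear.Build F _ _ _ Phi Phi_is_semilinear.

Definition diagr (Z : 'M[F]_n) : 'rV[F]_n := \row_i Z i i.
Fact diagr_is_semilinear : semilinear diagr.
Proof. by split=> [c A|A1 A2]; apply/rowP=> i; rewrite !mxE. Qed.
HB.instance Definition _ := GRing.isSemilinear.Build F _ _ _ diagr diagr_is_semilinear.

Definition Zsp : {vspace 'M[F]_n} := lker (linfun diagr).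
Definition LW : {vspace 'M[F]_(n + n)} := (linfun Phi @: Zsp)%VS.

Lemma Zsp_dim : \dim Zsp = (n * n - n)%N.
Proof.
have := limg_ker_dim (linfun diagr) fullv; rewrite capfv -/Zsp.
have -> : (linfun diagr @: fullv)%VS = fullv.
  apply/vspaceP=> r; rewrite memvf; apply/memv_imgP; exists (diag_mx r).
    by rewrite memvf.
  by rewrite lfunE /=; apply/rowP=> i; rewrite !mxE eqxx mulr1n.
rewrite !dimvf !dim_matrix => h.
have h' : (\dim Zsp + n)%N = (n * n)%N by move: h; rewrite mul1r.
by rewrite -h' addnK.
Qed.

Lemma LW_dim : \dim LW = (n * (n - 1))%N.
Proof.
rewrite /LW limg_dim_eq ?Zsp_dim ?mulnBr ?muln1 //.
apply/eqP; rewrite -subv0; apply/subvP => Z.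
rewrite memv_cap !memv_ker !lfunE /= memv0 => /andP [/eqP hd /eqP hP].
have hP' : block_mx (lowp Z - (lowp Z)^T) (upp Z) (- (upp Z)^T) 0 = 0.
  rewrite -hP /Phi /KZ tr_block_mx opp_block_mx add_block_mx !trmx0 !oppr0.
  by rewrite !addr0 add0r.
have hu : upp Z = 0.
  have := congr1 ursubmx hP'; rewrite block_mxKur => ->.
  by apply/matrixP=> i j; rewrite !mxE.
have hl : lowp Z - (lowp Z)^T = 0.
  have := congr1 ulsubmx hP'; rewrite block_mxKul => ->.
  by apply/matrixP=> i j; rewrite !mxE.
apply/eqP/matrixP=> i j; rewrite [RHS]mxE.
case: (ltngtP i j) => hij.
- by move/matrixP: hu => /(_ i j); rewrite !mxE hij.
- move/matrixP: hl => /(_ i j); rewrite !mxE hij.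
  by rewrite ltnNge (ltnW hij) /= subr0.
- move/rowP: hd => /(_ i); rewrite !mxE => <-.
  by rewrite (val_inj hij).
Qed.


Lemma unip_unit (Z : 'M[F]_n) : (1%:M + upp Z) \in unitmx.
Proof.
rewrite -unitmx_tr unitmxE det_trig.
  rewrite big1 ?unitr1 // => i _; rewrite !mxE eqxx ltnn /= addr0.
  by [].
apply/is_trig_mxP => i j hij; rewrite !mxE.
have -> : (j == i) = false by apply/negbTE; rewrite neq_ltn hij orbT.
by rewrite ltnNge (ltnW hij) /= addr0.
Qed.

Lemma LA0_Phi (Z : 'M[F]_n) :
  LA0 + Phi Z = block_mx (lowp Z - (lowp Z)^T) (1%:M + upp Z) (- (1%:M + upp Z)^T) 0.
Proof.
have -> : LA0 + Phi Z = (K0 + KZ Z) - (K0 + KZ Z)^T.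
  by rewrite /LA0 /Phi linearD /= opprD addrACA.
rewrite /K0 /KZ add_block_mx !add0r tr_block_mx opp_block_mx add_block_mx.
by rewrite !trmx0 !oppr0 ?addr0 ?add0r.
Qed.

Lemma LB_main : [/\ (forall B, B \in LW -> alternating B), alternating LA0,
  symplectic_affine LA0 LW & \dim LW = (n * (n - 1))%N].
Proof.
split; last exact: LW_dim.
- by move=> B /memv_imgP [Z _ ->]; rewrite lfunE /=; exact: alt_KKt.
- exact: alt_KKt.
- move=> B /memv_imgP [Z _ ->]; rewrite lfunE /=; split.
    by rewrite /LA0 /Phi addrACA -opprD -linearD /=; exact: alt_KKt.
  rewrite LA0_Phi; apply: block_nondeg; exact: unip_unit.
Qed.

End Lower.
Unset Implicit Arguments.

Theorem theorem3 (F : fieldType) (n : nat)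
  (hF : exists s : seq F, uniq s /\ (2 * n - 1 <= size s)%N) :
  (exists (A0 : 'M[F]_(2 * n)) (W : {vspace 'M[F]_(2 * n)}),
      (forall B, B \in W -> alternating B) /\ alternating A0 /\
      symplectic_affine A0 W /\ \dim W = (n * (n - 1))%N)
  /\ (forall (A0 : 'M[F]_(2 * n)) (W : {vspace 'M[F]_(2 * n)}),
      (forall B, B \in W -> alternating B) -> alternating A0 ->
      symplectic_affine A0 W -> (\dim W <= n * (n - 1))%N).
Proof.
have [s [us hs]] := hF.
split.
- have e : (2 * n = n + n)%N by lia.
  move: (2 * n)%N e => m ->.
  have [h1 h2 h3 h4] := LB_main F n.
  by exists (LA0 F n), (LW F n).
- move=> A0 W hW hA hS; rewrite -hb_even.
  apply: (UB us _ hW hA hS).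
  by move: hs; lia.
Qed.
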